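(* (a) If $X\sim\mathrm{Poisson}(\lambda)$ and $Y\sim\mathrm{Poisson}(\mu)$ with $\lambda,\mu>0$, then $X\le_{wd}Y$ if and only if $\lambda\le\mu$. (b) If $X\sim\mathrm{Bin}(m,p)$ and $Y\sim\mathrm{Bin}(n,p)$ with $p\in(0,1)$, then $X\le_{wd}Y$ if and only if $m\le n$. (c) If $X\sim\mathrm{NB}(r,p)$ and $Y\sim\mathrm{NB}(s,p)$, then $X\le_{wd}Y$ if and only if $r\le s$.
   Context: For a real random variable $X$, its Lévy concentration function is $Q_X(\varepsilon)=\sup_{x_0\in\mathbb{R}}\Pr\{X\in[x_0,x_0+\varepsilon]\}$, $\varepsilon>0$. For random variables $X,Y$, write $X\le_{wd}Y$ if $Q_X(\varepsilon)\ge Q_Y(\varepsilon)$ for all $\varepsilon>0$. $\mathrm{NB}(r,p)$ denotes the negative binomial distribution with size parameter $r>0$ and success probability $p\in(0,1)$ (so that $\mathrm{NB}(r,p)*\mathrm{NB}(s,p)=\mathrm{NB}(r+s,p)$). *)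

(* Defs.v *)
From Stdlib Require Import Reals Arith.
From Coquelicot Require Import Coquelicot.
Open Scope R_scope.

Definition prob_interval (pmf : nat -> R) (a b : R) : R :=
  Series (fun k : nat =>
    if Rle_dec a (INR k) then (if Rle_dec (INR k) b then pmf k else 0) else 0).

Definition levy_conc (pmf : nat -> R) (eps : R) : Rbar :=
  Lub_Rbar (fun y : R => exists x0 : R, y = prob_interval pmf x0 (x0 + eps)).

Definition wd_le (pmfX pmfY : nat -> R) : Prop :=
  forall eps : R, 0 < eps -> Rbar_le (levy_conc pmfY eps) (levy_conc pmfX eps).

Definition poisson_pmf (lam : R) (k : nat) : R :=
  exp (- lam) * lam ^ k / INR (Factorial.fact k).

Definition binom_pmf (n : nat) (p : R) (k : nat) : R :=
  if Nat.leb k n then Binomial.C n k * p ^ k * (1 - p) ^ (n - k) else 0.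

Fixpoint rising (r : R) (k : nat) : R :=
  match k with O => 1 | S k' => rising r k' * (r + INR k') end.

(* NB(r,p) pmf: P(k) = C(k+r-1,k) p^r (1-p)^k  (number of failures before the
   r-th success, success probability p); NB(r,p)*NB(s,p) = NB(r+s,p). *)
Definition negbin_pmf (r p : R) (k : nat) : R :=
  rising r k / INR (Factorial.fact k) * Rpower p r * (1 - p) ^ k.

(* Main.v *)
Require Import Defs.
From Stdlib Require Import Reals Lra Lia FunctionalExtensionality.
From Coquelicot Require Import Coquelicot.
Open Scope R_scope.

Fixpoint fsum (f : nat -> R) (n : nat) : R :=
  match n with O => 0 | S n' => fsum f n' + f n' end.

Lemma fsum_ext f g n : (forall k, (k < n)%nat -> f k = g k) -> fsum f n = fsum g n.
Proof. induction n; simpl; intros H; [reflexivity|]. rewrite IHn, H; auto; intros; apply H; lia. Qed.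

Lemma fsum_le f g n : (forall k, (k < n)%nat -> f k <= g k) -> fsum f n <= fsum g n.
Proof. induction n; simpl; intros H; [lra|]. assert (H1:=H n (Nat.lt_succ_diag_r n)).
  assert (fsum f n <= fsum g n) by (apply IHn; intros; apply H; lia). lra. Qed.

Lemma fsum_nonneg f n : (forall k, 0 <= f k) -> 0 <= fsum f n.
Proof. intros H; induction n; simpl; [lra|]. specialize (H n); lra. Qed.

Lemma fsum_mono f n m : (forall k, 0 <= f k) -> (n <= m)%nat -> fsum f n <= fsum f m.
Proof. intros H Hm; induction Hm; [lra|]. simpl. specialize (H m); lra. Qed.

Lemma fsum_tail f n m : (forall k, (n <= k)%nat -> f k = 0) -> (n <= m)%nat -> fsum f m = fsum f n.
Proof. intros H Hm; induction Hm; [reflexivity|]. simpl. rewrite IHHm, H; [lra|lia]. Qed.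

Lemma fsum_plus f g n : fsum (fun k => f k + g k) n = fsum f n + fsum g n.
Proof. induction n; simpl; [lra|]. rewrite IHn; lra. Qed.

Lemma fsum_scal c f n : fsum (fun k => c * f k) n = c * fsum f n.
Proof. induction n; simpl; [lra|]. rewrite IHn; lra. Qed.

Lemma fsum_zero n : fsum (fun _ => 0) n = 0.
Proof. induction n; simpl; [lra|]. rewrite IHn; lra. Qed.

Lemma fsum_swap (h : nat -> nat -> R) N M :
  fsum (fun k => fsum (fun j => h j k) M) N = fsum (fun j => fsum (fun k => h j k) N) M.
Proof. induction N; simpl.
  - rewrite fsum_zero; reflexivity.
  - rewrite IHN. rewrite <- fsum_plus. reflexivity. Qed.

Lemma fsum_shift (g : nat -> R) j N :
  fsum (fun k => if Nat.leb j k then g (k - j)%nat else 0) N = fsum g (N - j).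
Proof. induction N; [reflexivity|]. cbn [fsum].
  rewrite IHN. destruct (Nat.leb j N) eqn:E.
  - apply Nat.leb_le in E. replace (S N - j)%nat with (S (N - j)) by lia. cbn [fsum]. reflexivity.
  - apply Compare_dec.leb_iff_conv in E. replace (S N - j)%nat with (N - j)%nat by lia. lra. Qed.

Lemma sum_n_fsum u n : sum_n u n = fsum u (S n).
Proof. induction n.
  - rewrite sum_O. simpl. lra.
  - rewrite sum_Sn, IHn. reflexivity. Qed.

Lemma is_series_fin u n : (forall k, (n <= k)%nat -> u k = 0) -> is_series u (fsum u n).
Proof. intros H.
  assert (L : is_lim_seq (sum_n u) (fsum u n)).
  { apply is_lim_seq_ext_loc with (u := fun _ => fsum u n); [|apply is_lim_seq_const].
    exists n. intros k Hk. rewrite sum_n_fsum. symmetry. apply fsum_tail; auto. }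
  exact L. Qed.

Definition ind (p : nat -> R) (a b : R) (k : nat) : R :=
  if Rle_dec a (INR k) then (if Rle_dec (INR k) b then p k else 0) else 0.

Lemma prob_fin p a b N : b < INR N -> prob_interval p a b = fsum (ind p a b) N.
Proof. intros HN. unfold prob_interval. apply is_series_unique. apply is_series_fin.
  intros k Hk. unfold ind. apply le_INR in Hk.
  destruct (Rle_dec a (INR k)); [|reflexivity]. destruct (Rle_dec (INR k) b); [lra|reflexivity]. Qed.

Definition nonneg (p : nat -> R) := forall k, 0 <= p k.

Lemma ind_nonneg p a b : nonneg p -> nonneg (ind p a b).
Proof. intros H k; unfold ind. destruct Rle_dec; [destruct Rle_dec|]; auto; lra. Qed.

Lemma ind_le p a b k : nonneg p -> ind p a b k <= p k.
Proof. intros H; unfold ind. destruct Rle_dec; [destruct Rle_dec|]; auto; try lra; apply H. Qed.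

Lemma prob_ge p a b n : nonneg p -> fsum (ind p a b) n <= prob_interval p a b.
Proof. intros H. destruct (INR_unbounded b) as [N0 HN0].
  rewrite (prob_fin p a b (max n N0)).
  - apply fsum_mono; [apply ind_nonneg; auto| lia].
  - apply Rlt_le_trans with (INR N0); [lra|apply le_INR; lia]. Qed.

Lemma prob_nonneg p a b : nonneg p -> 0 <= prob_interval p a b.
Proof. intros H. apply Rle_trans with (fsum (ind p a b) 0); [simpl; lra|]. apply prob_ge; auto. Qed.

Definition sub (p : nat -> R) := nonneg p /\ forall N, fsum p N <= 1.

Lemma prob_le1 p a b : sub p -> prob_interval p a b <= 1.
Proof. intros [H1 H2]. destruct (INR_unbounded b) as [N HN]. rewrite (prob_fin p a b N) by lra.
  apply Rle_trans with (fsum p N); auto. apply fsum_le; intros; apply ind_le; auto. Qed.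

Definition conv (pZ pX : nat -> R) (k : nat) : R :=
  fsum (fun j => pZ j * pX (k - j)%nat) (S k).

Lemma fsum_extend F k N : (S k <= N)%nat ->
  fsum F (S k) = fsum (fun j => if Nat.leb j k then F j else 0) N.
Proof. intros H. rewrite (fsum_tail (fun j => if Nat.leb j k then F j else 0) (S k) N).
  - apply fsum_ext. intros j Hj. destruct (Nat.leb j k) eqn:E; auto.
    apply Compare_dec.leb_iff_conv in E; lia.
  - intros j Hj. destruct (Nat.leb j k) eqn:E; auto. apply Nat.leb_le in E; lia.
  - auto. Qed.

Lemma ind_shift p a b j k : (j <= k)%nat ->
  ind p (a - INR j) (b - INR j) (k - j) =
  if Rle_dec a (INR k) then (if Rle_dec (INR k) b then p (k - j)%nat else 0) else 0.
Proof. intros H. unfold ind. rewrite minus_INR by auto.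
  destruct (Rle_dec (a - INR j) (INR k - INR j)); destruct (Rle_dec a (INR k)); try lra;
  destruct (Rle_dec (INR k - INR j) (b - INR j)); destruct (Rle_dec (INR k) b); lra. Qed.

Lemma ind_conv p q a b k :
  ind (conv p q) a b k = fsum (fun j => p j * ind q (a - INR j) (b - INR j) (k - j)) (S k).
Proof.
  rewrite (fsum_ext _ (fun j => p j * (if Rle_dec a (INR k) then (if Rle_dec (INR k) b then q (k - j)%nat else 0) else 0))).
  2:{ intros j Hj. rewrite ind_shift by lia. reflexivity. }
  unfold ind, conv. destruct (Rle_dec a (INR k)); [destruct (Rle_dec (INR k) b)|].
  - reflexivity.
  - rewrite (fsum_ext _ (fun _ => 0)); [rewrite fsum_zero; auto|intros; lra].
  - rewrite (fsum_ext _ (fun _ => 0)); [rewrite fsum_zero; auto|intros; lra]. Qed.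

Lemma conv_bound pZ pX eps M : sub pZ -> nonneg pX ->
  (forall x0, prob_interval pX x0 (x0 + eps) <= M) ->
  forall a, prob_interval (conv pZ pX) a (a + eps) <= M.
Proof.
  intros [HZ1 HZ2] HX HM a.
  assert (M0 : 0 <= M) by (eapply Rle_trans; [apply (prob_nonneg pX 0 (0+eps) HX)|apply HM]).
  destruct (INR_unbounded (a + eps)) as [N HN].
  rewrite (prob_fin _ _ _ N) by lra.
  set (h := fun j k => if Nat.leb j k then pZ j * ind pX (a - INR j) (a + eps - INR j) (k - j) else 0).
  rewrite (fsum_ext _ (fun k => fsum (fun j => h j k) N)).
  2:{ intros k Hk. rewrite ind_conv. apply fsum_extend. lia. }
  rewrite fsum_swap.
  apply Rle_trans with (fsum (fun j => pZ j * M) N).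
  2:{ rewrite (fsum_ext _ (fun j => M * pZ j)) by (intros; lra). rewrite fsum_scal.
      specialize (HZ2 N). apply Rmult_le_compat_l with (r := M) in HZ2; lra. }
  apply fsum_le. intros j Hj.
  unfold h. 
  rewrite (fsum_ext _ (fun k => pZ j * (if Nat.leb j k then ind pX (a - INR j) (a + eps - INR j) (k - j) else 0))).
  2:{ intros k _. destruct (Nat.leb j k); lra. }
  rewrite fsum_scal. apply Rmult_le_compat_l; [apply HZ1|].
  rewrite fsum_shift.
  eapply Rle_trans; [apply prob_ge; auto|].
  replace (a + eps - INR j) with ((a - INR j) + eps) by ring. apply HM. Qed.

Lemma conv_nonneg p q : nonneg p -> nonneg q -> nonneg (conv p q).
Proof. intros Hp Hq k. apply fsum_nonneg. intros j. apply Rmult_le_pos; auto. Qed.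

Lemma conv_sub p q : sub p -> sub q -> sub (conv p q).
Proof. intros Hp Hq. split; [apply conv_nonneg; [apply Hp|apply Hq]|].
  intros N. assert (Hb := conv_bound p q (INR N + 1) 1 Hp (proj1 Hq) (fun x0 => prob_le1 q _ _ Hq) (-1)).
  eapply Rle_trans; [|apply Hb].
  eapply Rle_trans; [|apply prob_ge; apply conv_nonneg; [apply Hp|apply Hq]].
  right. apply fsum_ext. intros k Hk. unfold ind. apply lt_INR in Hk.
  assert (0 <= INR k) by apply pos_INR.
  destruct Rle_dec; [destruct Rle_dec|]; lra. Qed.

Lemma levy_ub p eps (M : R) : (forall x0, prob_interval p x0 (x0 + eps) <= M) ->
  Rbar_le (levy_conc p eps) M.
Proof. intros H. unfold levy_conc. destruct (Lub_Rbar_correct (fun y => exists x0, y = prob_interval p x0 (x0 + eps))) as [_ H2].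
  apply H2. intros y [x0 ->]. simpl. apply H. Qed.

Lemma levy_lb p eps x0 : Rbar_le (prob_interval p x0 (x0 + eps)) (levy_conc p eps).
Proof. unfold levy_conc. destruct (Lub_Rbar_correct (fun y => exists x0, y = prob_interval p x0 (x0 + eps))) as [H1 _].
  apply H1. exists x0; reflexivity. Qed.

Lemma levy_fin p eps : sub p -> exists M : R, levy_conc p eps = Finite M /\
  (forall x0, prob_interval p x0 (x0 + eps) <= M).
Proof. intros Hs.
  assert (U := levy_ub p eps 1 (fun x0 => prob_le1 p _ _ Hs)).
  assert (L := levy_lb p eps 0).
  destruct (levy_conc p eps) eqn:E; simpl in *; try tauto.
  exists r. split; auto. intros x0. assert (L2 := levy_lb p eps x0). rewrite E in L2. exact L2. Qed.

Theorem wd_conv pZ pX : sub pZ -> sub pX -> wd_le pX (conv pZ pX).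
Proof. intros HZ HX eps _. destruct (levy_fin pX eps HX) as [M [E HM]]. rewrite E.
  apply levy_ub. apply conv_bound; auto. apply HX. Qed.

Lemma fsum_single f N c : nonneg f -> (forall k, f k <= c) -> 0 <= c ->
  (forall i j, f i <> 0 -> f j <> 0 -> i = j) -> fsum f N <= c.
Proof. intros H0 Hc c0 Hu. induction N; simpl; [lra|].
  destruct (Req_dec (f N) 0) as [E|E]; [rewrite E; lra|].
  rewrite (fsum_ext _ (fun _ => 0)). rewrite fsum_zero. specialize (Hc N); lra.
  intros k Hk. destruct (Req_dec (f k) 0); auto. specialize (Hu k N H E). lia. Qed.

Lemma prob_half p a c : nonneg p -> (forall k, p k <= c) -> 0 <= c ->
  prob_interval p a (a + /2) <= c.
Proof. intros H0 Hc c0. destruct (INR_unbounded (a + /2)) as [N HN].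
  rewrite (prob_fin _ _ _ N) by lra. apply fsum_single; auto.
  - apply ind_nonneg; auto.
  - intros k. eapply Rle_trans; [apply ind_le; auto|apply Hc].
  - assert (A : forall i, ind p a (a + /2) i <> 0 -> a <= INR i <= a + /2).
    { intros i. unfold ind. destruct Rle_dec; [destruct Rle_dec|]; intros; try lra; tauto. }
    intros i j Hi Hj. apply A in Hi. apply A in Hj.
    destruct (Nat.lt_total i j) as [L|[L|L]]; auto; apply le_INR in L; rewrite S_INR in L; lra. Qed.

Fixpoint fmax (g : nat -> R) (n : nat) : R :=
  match n with O => 0 | S n' => Rmax (fmax g n') (g n') end.

Lemma fmax_ge g n k : (k < n)%nat -> g k <= fmax g n.
Proof. induction n; intros H; [lia|]. simpl. destruct (Nat.eq_dec k n) as [->|D].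
  - apply Rmax_r.
  - eapply Rle_trans; [apply IHn; lia|apply Rmax_l]. Qed.

Lemma fmax_lt g n M : 0 < M -> (forall k, (k < n)%nat -> g k < M) -> fmax g n < M.
Proof. induction n; intros HM H; simpl; [lra|]. apply Rmax_lub_lt; [apply IHn; auto|apply H; lia]. Qed.

Theorem wd_strict pZ pY : sub pZ -> sub pY -> (forall k, 0 < pZ k) -> 0 < pY 0%nat ->
  is_lim_seq (conv pZ pY) 0 -> ~ wd_le (conv pZ pY) pY.
Proof.
  intros HZ HY Zpos Y0 Hlim Hwd.
  destruct (levy_fin pY (/2) HY) as [M [EM HM]].
  assert (HMk : forall k, pY k <= M).
  { intros k. eapply Rle_trans; [|apply (HM (INR k))].
    eapply Rle_trans; [|apply (prob_ge _ _ _ (S k)); apply HY]. simpl.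
    assert (0 <= fsum (ind pY (INR k) (INR k + / 2)) k) by (apply fsum_nonneg; apply ind_nonneg; apply HY).
    assert (ind pY (INR k) (INR k + / 2) k = pY k) by (unfold ind; destruct Rle_dec; [destruct Rle_dec|]; lra).
    lra. }
  assert (Mpos : 0 < M) by (specialize (HMk 0%nat); lra).
  assert (Hlt : forall k, conv pZ pY k < M).
  { intros k. unfold conv.
    apply Rle_lt_trans with (fsum (fun j => M * pZ j) (S k)).
    - apply fsum_le. intros j _. rewrite Rmult_comm. apply Rmult_le_compat_r; [apply (proj1 HZ)|apply HMk].
    - rewrite fsum_scal. destruct HZ as [_ HZ2]. specialize (HZ2 (S (S k))). simpl in HZ2.
      specialize (Zpos (S k)). simpl.
      assert (M * (fsum pZ k + pZ k) <= M * (1 - pZ (S k))) by (apply Rmult_le_compat_l; lra).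
      nra. }
  apply is_lim_seq_spec in Hlim.
  destruct (Hlim (mkposreal (M/2) ltac:(lra))) as [K HK]. simpl in HK.
  set (c := Rmax (fmax (conv pZ pY) K) (M/2)).
  assert (Hc : forall k, conv pZ pY k <= c).
  { intros k. destruct (Nat.lt_ge_cases k K).
    - eapply Rle_trans; [apply fmax_ge; eauto|apply Rmax_l].
    - specialize (HK k H). eapply Rle_trans; [|apply Rmax_r]. apply Rabs_def2 in HK. lra. }
  assert (cM : c < M). { apply Rmax_lub_lt; [apply fmax_lt; auto|lra]. }
  assert (c0 : 0 <= c) by (eapply Rle_trans; [|apply Rmax_r]; lra).
  assert (U : Rbar_le (levy_conc (conv pZ pY) (/2)) c).
  { apply levy_ub. intros x0. apply prob_half; auto. apply conv_nonneg; [apply HZ|apply HY]. }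
  specialize (Hwd (/2) ltac:(lra)). rewrite EM in Hwd.
  assert (T := Rbar_le_trans _ _ _ Hwd U). simpl in T. lra. Qed.

Lemma sub_lim p : sub p -> is_lim_seq p 0.
Proof. intros [H1 H2]. apply ex_series_lim_0.
  destruct (ex_finite_lim_seq_incr (sum_n p) 1) as [l Hl].
  - intros n. rewrite !sum_n_fsum. simpl. specialize (H1 (S n)). simpl. lra.
  - intros n. rewrite sum_n_fsum. apply H2.
  - exists l. exact Hl. Qed.

Lemma wd_refl p : wd_le p p.
Proof. intros eps _. apply Rbar_le_refl. Qed.

Lemma wd_trans p q r : wd_le p q -> wd_le q r -> wd_le p r.
Proof. intros H1 H2 eps He. eapply Rbar_le_trans; [apply H2|apply H1]; auto. Qed.

Lemma sum_f_fsum f n : sum_f_R0 f n = fsum f (S n).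
Proof. induction n; simpl; [lra|]. rewrite IHn. simpl. lra. Qed.

Lemma pois_pos l k : 0 < l -> 0 < poisson_pmf l k.
Proof. intros H. unfold poisson_pmf. apply Rdiv_lt_0_compat; [|apply INR_fact_lt_0].
  apply Rmult_lt_0_compat; [apply exp_pos|apply pow_lt; auto]. Qed.

Lemma pois_sub l : 0 < l -> sub (poisson_pmf l).
Proof. intros H. split; [intros k; left; apply pois_pos; auto|].
  intros [|n]; [simpl; lra|].
  assert (E := is_exp_Reals l). unfold is_pseries in E.
  assert (E2 : is_lim_seq (sum_n (fun k : nat => scal (pow_n l k) (/ INR (Factorial.fact k)))) (exp l)) by exact E.
  assert (B := is_lim_seq_incr_compare _ _ E2).
  assert (B2 : sum_n (fun k : nat => scal (pow_n l k) (/ INR (Factorial.fact k))) n <= exp l).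
  { apply B. intros m. rewrite sum_Sn.
    assert (HP : forall a b : R, 0 <= b -> a <= plus a b) by (intros; unfold plus; simpl; lra).
    apply HP. unfold scal; simpl; unfold mult; simpl.
    apply Rmult_le_pos; [left; apply (pow_lt l (S m)); auto|left; apply Rinv_0_lt_compat, (INR_fact_lt_0 (S m))]. }
  rewrite sum_n_fsum in B2.
  rewrite (fsum_ext _ (fun k => exp (-l) * (scal (pow_n l k) (/ INR (Factorial.fact k))))).
  - rewrite fsum_scal. apply Rmult_le_compat_l with (r := exp (-l)) in B2; [|left; apply exp_pos].
    rewrite <- exp_plus in B2. replace (-l + l) with 0 in B2 by ring. rewrite exp_0 in B2. lra.
  - intros k _. unfold poisson_pmf. rewrite <- pow_n_pow. unfold Rdiv. rewrite Rmult_assoc. reflexivity. Qed.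

Lemma pois_conv nu l k : poisson_pmf (nu + l) k = conv (poisson_pmf nu) (poisson_pmf l) k.
Proof. unfold conv, poisson_pmf. rewrite binomial, sum_f_fsum.
  unfold Rdiv. rewrite (Rmult_comm _ (/ INR _)). rewrite <- Rmult_assoc. rewrite <- fsum_scal. apply fsum_ext.
intros j Hj. unfold Binomial.C.
  replace (- (nu + l)) with (-nu + - l) by ring. rewrite exp_plus.
  assert (F1 := INR_fact_neq_0 k). assert (F2 := INR_fact_neq_0 j). assert (F3 := INR_fact_neq_0 (k - j)).
  field. auto. Qed.

Theorem pois_part lam mu : 0 < lam -> 0 < mu ->
  (wd_le (poisson_pmf lam) (poisson_pmf mu) <-> lam <= mu).
Proof. intros Hl Hm. split.
  - intros H. destruct (Rle_or_lt lam mu) as [|Hlt]; auto. exfalso.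
    assert (E : poisson_pmf lam = conv (poisson_pmf (lam - mu)) (poisson_pmf mu)).
    { apply functional_extensionality. intros k. rewrite <- pois_conv. f_equal; ring. }
    rewrite E in H. revert H. apply wd_strict.
    + apply pois_sub; lra.
    + apply pois_sub; lra.
    + intros; apply pois_pos; lra.
    + apply pois_pos; lra.
    + rewrite <- E. apply sub_lim, pois_sub; lra.
  - intros H. destruct H as [Hlt|<-]; [|apply wd_refl].
    assert (E : poisson_pmf mu = conv (poisson_pmf (mu - lam)) (poisson_pmf lam)).
    { apply functional_extensionality. intros k. rewrite <- pois_conv. f_equal; ring. }
    rewrite E. apply wd_conv; apply pois_sub; lra. Qed.

Lemma C0 n : Binomial.C n 0 = 1.
Proof. unfold Binomial.C. rewrite Nat.sub_0_r. simpl. assert (H:=INR_fact_neq_0 n). field; auto. Qed.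

Lemma Cnn n : Binomial.C n n = 1.
Proof. rewrite pascal_step1 by lia. rewrite Nat.sub_diag. apply C0. Qed.

Lemma C_pos n k : 0 < Binomial.C n k.
Proof. unfold Binomial.C. apply Rdiv_lt_0_compat; [apply INR_fact_lt_0|apply Rmult_lt_0_compat; apply INR_fact_lt_0]. Qed.

Lemma binom_nonneg n p : 0 < p < 1 -> nonneg (binom_pmf n p).
Proof. intros Hp k. unfold binom_pmf. destruct (Nat.leb k n); [|lra].
  left. apply Rmult_lt_0_compat; [apply Rmult_lt_0_compat; [apply C_pos|apply pow_lt; lra]|apply pow_lt; lra]. Qed.

Lemma binom_total n p : fsum (binom_pmf n p) (S n) = 1.
Proof. rewrite <- sum_f_fsum.
  transitivity ((p + (1 - p)) ^ n); [|replace (p + (1-p)) with 1 by ring; apply pow1].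
  rewrite binomial. apply sum_eq. intros i Hi. unfold binom_pmf.
  replace (Nat.leb i n) with true; [reflexivity|symmetry; apply Nat.leb_le; lia]. Qed.

Lemma binom_tail n p k : (S n <= k)%nat -> binom_pmf n p k = 0.
Proof. intros H. unfold binom_pmf. replace (Nat.leb k n) with false; [reflexivity|].
  symmetry; apply Compare_dec.leb_iff_conv; lia. Qed.

Lemma binom_sub n p : 0 < p < 1 -> sub (binom_pmf n p).
Proof. intros Hp. split; [apply binom_nonneg; auto|]. intros N.
  apply Rle_trans with (fsum (binom_pmf n p) (max N (S n))).
  - apply fsum_mono; [apply binom_nonneg; auto|lia].
  - rewrite (fsum_tail _ (S n)); [rewrite binom_total; lra| |lia]. intros; apply binom_tail; auto. Qed.

Definition bern (p : R) (k : nat) : R := match k with O => 1 - p | 1%nat => p | _ => 0 end.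

Lemma bern_sub p : 0 < p < 1 -> sub (bern p).
Proof. intros Hp. split.
  - intros [|[|k]]; simpl; lra.
  - intros N. eapply Rle_trans; [apply fsum_mono; [intros [|[|k]]; simpl; lra|apply (Nat.le_max_l N 2)]|].
    rewrite (fsum_tail _ 2 (max N 2)); [|intros [|[|k]] Hk; [lia|lia|reflexivity]|lia]. simpl. lra. Qed.

Lemma binom_step n p k : binom_pmf (S n) p k = conv (bern p) (binom_pmf n p) k.
Proof. unfold conv. destruct k as [|k].
  - simpl. unfold binom_pmf. simpl. rewrite !C0, !Nat.sub_0_r. ring.
  - rewrite (fsum_tail _ 2); [|intros [|[|j]] Hj; [lia|lia|simpl; ring]|lia].
    cbn [fsum bern]. replace (S k - 0)%nat with (S k) by lia. replace (S k - 1)%nat with k by lia.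
    unfold binom_pmf. destruct (Nat.lt_total k n) as [L|[L|L]].
    + replace (Nat.leb (S k) (S n)) with true by (symmetry; apply Nat.leb_le; lia).
      replace (Nat.leb (S k) n) with true by (symmetry; apply Nat.leb_le; lia).
      replace (Nat.leb k n) with true by (symmetry; apply Nat.leb_le; lia).
      rewrite <- pascal by auto.
      replace (S n - S k)%nat with (S (n - S k)) by lia. replace (n - k)%nat with (S (n - S k)) by lia.
      cbn [pow]. ring.
    + rewrite <- L. rewrite Nat.leb_refl.
      replace (Nat.leb (S k) k) with false by (symmetry; apply Compare_dec.leb_iff_conv; lia).
      rewrite !Nat.sub_diag, !Cnn, Nat.leb_refl. cbn [pow]. ring.
    + replace (Nat.leb (S k) (S n)) with false by (symmetry; apply Compare_dec.leb_iff_conv; lia).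
      replace (Nat.leb (S k) n) with false by (symmetry; apply Compare_dec.leb_iff_conv; lia).
      replace (Nat.leb k n) with false by (symmetry; apply Compare_dec.leb_iff_conv; lia). ring. Qed.

Lemma binom_mono m n p : 0 < p < 1 -> (m <= n)%nat -> wd_le (binom_pmf m p) (binom_pmf n p).
Proof. intros Hp H. induction H; [apply wd_refl|].
  eapply wd_trans; [apply IHle|].
  replace (binom_pmf (S m0) p) with (conv (bern p) (binom_pmf m0 p)).
  - apply wd_conv; [apply bern_sub|apply binom_sub]; auto.
  - apply functional_extensionality; intros; symmetry; apply binom_step. Qed.

Lemma fsum_miss f g N j : (j < N)%nat -> (forall k, (k < N)%nat -> f k <= g k) -> f j = 0 ->
  fsum f N + g j <= fsum g N.
Proof. induction N; intros Hj H Hf; [lia|]. simpl. destruct (Nat.eq_dec j N) as [->|D].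
  - assert (fsum f N <= fsum g N) by (apply fsum_le; intros; apply H; lia). lra.
  - assert (fsum f N + g j <= fsum g N) by (apply IHN; [lia|intros; apply H; lia|auto]).
    specialize (H N ltac:(lia)). lra. Qed.

Lemma binom_strict m n p : 0 < p < 1 -> (n < m)%nat -> ~ wd_le (binom_pmf m p) (binom_pmf n p).
Proof. intros Hp Hnm Hwd. set (eps := INR n + /2).
  assert (L : Rbar_le 1 (levy_conc (binom_pmf n p) eps)).
  { eapply Rbar_le_trans; [|apply (levy_lb _ _ 0)]. simpl.
    eapply Rle_trans; [|apply (prob_ge _ _ _ (S n)); apply binom_nonneg; auto].
    rewrite <- (binom_total n p). right. apply fsum_ext. intros k Hk.
    unfold ind. assert (Hk2 : (k <= n)%nat) by lia. apply le_INR in Hk2. assert (0 <= INR k) by apply pos_INR.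
    unfold eps. destruct Rle_dec; [destruct Rle_dec|]; lra. }
  set (d := Rmin (p ^ m) ((1 - p) ^ m)).
  assert (dpos : 0 < d) by (apply Rmin_pos; apply pow_lt; lra).
  assert (U : Rbar_le (levy_conc (binom_pmf m p) eps) (1 - d)).
  { apply levy_ub. intros x0. destruct (INR_unbounded (x0 + eps)) as [N0 HN0].
    set (N := max (S m) N0).
    rewrite (prob_fin _ _ _ N) by (apply Rlt_le_trans with (INR N0); [lra|apply le_INR; lia]).
    assert (T : fsum (binom_pmf m p) N = 1).
    { unfold N. rewrite (fsum_tail _ (S m)); [apply binom_total| |lia]. intros; apply binom_tail; auto. }
    assert (Hle : forall k, (k < N)%nat -> ind (binom_pmf m p) x0 (x0 + eps) k <= binom_pmf m p k)
      by (intros; apply ind_le; apply binom_nonneg; auto).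
    destruct (Rle_or_lt x0 0) as [Hx|Hx].
    - assert (M := fsum_miss _ _ N m ltac:(lia) Hle).
      assert (Hm : binom_pmf m p m = p ^ m).
      { unfold binom_pmf. rewrite Nat.leb_refl, Cnn, Nat.sub_diag. simpl. ring. }
      assert (d <= p ^ m) by apply Rmin_l.
      assert (ind (binom_pmf m p) x0 (x0 + eps) m = 0).
      { unfold ind, eps. destruct Rle_dec; [destruct Rle_dec|]; auto.
        exfalso. assert (Hs : INR (S n) <= INR m) by (apply le_INR; lia). rewrite S_INR in Hs. lra. }
      specialize (M H0). lra.
    - assert (M := fsum_miss _ _ N 0 ltac:(lia) Hle).
      assert (Hm : binom_pmf m p 0 = (1 - p) ^ m).
      { unfold binom_pmf. simpl. rewrite C0, Nat.sub_0_r. ring. }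
      assert (d <= (1 - p) ^ m) by apply Rmin_r.
      assert (ind (binom_pmf m p) x0 (x0 + eps) 0 = 0).
      { unfold ind. simpl. destruct Rle_dec; auto. lra. }
      specialize (M H0). lra. }
  assert (T := Rbar_le_trans _ _ _ L (Rbar_le_trans _ _ _ (Hwd eps ltac:(unfold eps; assert (0 <= INR n) by apply pos_INR; lra)) U)).
  simpl in T. lra. Qed.

Theorem binom_part m n p : 0 < p < 1 -> (wd_le (binom_pmf m p) (binom_pmf n p) <-> (m <= n)%nat).
Proof. intros Hp. split.
  - intros H. destruct (Nat.le_gt_cases m n); auto. exfalso. revert H. apply binom_strict; auto.
  - apply binom_mono; auto. Qed.

Definition ac (r : R) (k : nat) : R := rising r k / INR (Factorial.fact k).

Lemma rising_pos r k : 0 < r -> 0 < rising r k.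
Proof. intros H. induction k; simpl; [lra|]. apply Rmult_lt_0_compat; auto.
  assert (0 <= INR k) by apply pos_INR. lra. Qed.

Lemma ac_pos r k : 0 < r -> 0 < ac r k.
Proof. intros H. unfold ac. apply Rdiv_lt_0_compat; [apply rising_pos; auto|apply INR_fact_lt_0]. Qed.

Lemma ac0 r : ac r 0 = 1.
Proof. unfold ac. simpl. lra. Qed.

Lemma ac_S x j : ac x (S j) * INR (S j) = ac x j * (x + INR j).
Proof. unfold ac. cbn [rising]. rewrite fact_simpl, mult_INR.
  assert (H1 := INR_fact_neq_0 j). assert (H2 : INR (S j) <> 0) by (apply not_0_INR; lia).
  field. auto. Qed.

Lemma fsum_S0 f n : fsum f (S n) = f 0%nat + fsum (fun i => f (S i)) n.
Proof. induction n; simpl; [lra|]. simpl in IHn. rewrite IHn. lra. Qed.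

Lemma vandermonde t s k :
  fsum (fun j => ac t j * ac s (k - j)) (S k) = ac (t + s) k.
Proof. induction k.
  - simpl. rewrite !ac0. lra.
  - assert (HS : INR (S k) <> 0) by (apply not_0_INR; lia).
    apply Rmult_eq_reg_l with (INR (S k)); auto.
    rewrite (Rmult_comm _ (ac (t + s) (S k))), ac_S, <- IHk.
    rewrite <- fsum_scal.
    set (A := fun j => INR j * ac t j * ac s (S k - j)).
    set (B := fun j => INR (S k - j) * ac t j * ac s (S k - j)).
    rewrite (fsum_ext _ (fun j => A j + B j)).
    2:{ intros j Hj. unfold A, B. rewrite minus_INR by lia. ring. }
    rewrite fsum_plus.
    rewrite fsum_S0. 
    replace (A 0%nat) with 0 by (unfold A; simpl; ring).
    rewrite (fsum_ext (fun i => A (S i)) (fun i => (t + INR i) * (ac t i * ac s (k - i)))).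
    2:{ intros i Hi. unfold A. replace (S k - S i)%nat with (k - i)%nat by lia.
        rewrite (Rmult_comm (INR (S i)) (ac t (S i))), ac_S. ring. }
    change (fsum B (S (S k))) with (fsum B (S k) + B (S k)). replace (B (S k)) with 0 by (unfold B; rewrite Nat.sub_diag; simpl; ring).
    rewrite (fsum_ext B (fun j => (s + INR k - INR j) * (ac t j * ac s (k - j)))).
    2:{ intros j Hj. unfold B. replace (S k - j)%nat with (S (k - j)) by lia.
        rewrite (Rmult_comm _ (ac t j)), Rmult_assoc, (Rmult_comm (INR _)), ac_S, minus_INR by lia. ring. }
    rewrite !Rplus_0_r, Rplus_0_l, <- fsum_plus, Rmult_comm, <- fsum_scal. apply fsum_ext. intros j _. ring. Qed.

Lemma nb_eq r p k : negbin_pmf r p k = ac r k * Rpower p r * (1 - p) ^ k.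
Proof. reflexivity. Qed.

Lemma nb_conv t s p k : negbin_pmf (t + s) p k = conv (negbin_pmf t p) (negbin_pmf s p) k.
Proof. unfold conv. rewrite !nb_eq. rewrite <- vandermonde, Rpower_plus.
  rewrite Rmult_assoc, Rmult_comm, <- fsum_scal.
  apply fsum_ext. intros j Hj. rewrite !nb_eq.
  replace k with (j + (k - j))%nat at 1 by lia. rewrite pow_add. ring. Qed.

Lemma nb_pos r p k : 0 < r -> 0 < p < 1 -> 0 < negbin_pmf r p k.
Proof. intros Hr Hp. rewrite nb_eq. apply Rmult_lt_0_compat; [apply Rmult_lt_0_compat|].
  - apply ac_pos; auto.
  - unfold Rpower. apply exp_pos.
  - apply pow_lt; lra. Qed.

Definition hh (r x : R) := exp (r * ln (1 - x)).
Definition GG (r : R) (N : nat) (x : R) := hh r x * fsum (fun k => ac r k * x ^ k) N.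

Lemma hh_der r x : x < 1 -> is_derive (hh r) x (- (hh r x / (1 - x)) * r).
Proof. intros H. unfold hh. auto_derive; [lra|]. replace (1 + - x) with (1 - x) by ring. field. lra. Qed.

Lemma term_der r c N x : x < 1 -> is_derive (fun y => hh r y * (c * y ^ S N)) x
   (hh r x * c * (INR (S N) * x ^ N - r / (1 - x) * x ^ S N)).
Proof. intros H. unfold hh. auto_derive; [lra|]. replace (1 + - x) with (1 - x) by ring.
  change (match N with 0%nat => 1 | S _ => INR N + 1 end) with (INR (S N)). cbn [pow]. field. lra. Qed.

Lemma is_derive_eq (f : R -> R) (x d d' : R) : is_derive f x d -> d = d' -> is_derive f x d'.
Proof. intros H ->; exact H. Qed.

Lemma GG_der r N x : x < 1 -> is_derive (GG r (S N)) x
  (- (hh r x / (1 - x)) * ((r + INR N) * ac r N * x ^ N)).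
Proof. intros Hx. induction N.
  - apply is_derive_ext with (hh r).
    + intros y. unfold GG. simpl. rewrite ac0. ring.
    + eapply is_derive_eq; [apply hh_der; auto|]. rewrite ac0. simpl. ring.
  - apply (is_derive_ext (K:=R_AbsRing) (V:=R_NormedModule)) with (fun y => GG r (S N) y + hh r y * (ac r (S N) * y ^ S N)).
    + intros y. unfold GG. change (fsum (fun k => ac r k * y ^ k) (S (S N))) with
        (fsum (fun k => ac r k * y ^ k) (S N) + ac r (S N) * y ^ S N). rewrite Rmult_plus_distr_l. reflexivity.
    + eapply is_derive_eq; [apply (is_derive_plus (GG r (S N)) (fun y => hh r y * (ac r (S N) * y ^ S N))); [apply IHN|apply term_der; auto]|].
      change (plus ?a ?b) with (a + b).
      assert (E := ac_S r N). 
      replace ((r + INR N) * ac r N) with (ac r (S N) * INR (S N)) by (rewrite E; ring).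
      rewrite !S_INR. match goal with |- ?a = ?b => change (@eq R a b) end. cbn [pow]. field. lra. Qed.

Lemma fsum_at0 c N : fsum (fun k => c k * 0 ^ k) (S N) = c 0%nat.
Proof. induction N. - simpl. ring. - change (fsum (fun k => c k * 0 ^ k) (S (S N))) with
  (fsum (fun k => c k * 0 ^ k) (S N) + c (S N) * 0 ^ (S N)). rewrite IHN. simpl. ring. Qed.

Lemma GG_le1 r N q : 0 < r -> 0 <= q < 1 -> GG r N q <= 1.
Proof. intros Hr Hq. destruct N as [|N]. { unfold GG. simpl. lra. }
  assert (G0 : GG r (S N) 0 = 1).
  { unfold GG, hh. rewrite fsum_at0, ac0. replace (1 - 0) with 1 by ring. rewrite ln_1.
    rewrite Rmult_0_r, exp_0. ring. }
  destruct (MVT_gen (GG r (S N)) 0 q (fun x => - (hh r x / (1 - x)) * ((r + INR N) * ac r N * x ^ N))) as [c [Hc E]].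
  - intros x Hx. rewrite Rmin_left, Rmax_right in Hx by lra. apply GG_der. lra.
  - intros x Hx. rewrite Rmin_left, Rmax_right in Hx by lra.
    apply continuity_pt_filterlim. apply (ex_derive_continuous (K:=R_AbsRing) (V:=R_NormedModule)).
    eexists. apply GG_der. lra.
  - rewrite Rmin_left, Rmax_right in Hc by lra.
    assert (D : - (hh r c / (1 - c)) * ((r + INR N) * ac r N * c ^ N) <= 0).
    { assert (0 < hh r c / (1 - c)) by (apply Rdiv_lt_0_compat; [apply exp_pos|lra]).
      assert (0 <= (r + INR N) * ac r N * c ^ N).
      { apply Rmult_le_pos; [apply Rmult_le_pos|apply pow_le; lra].
        - assert (0 <= INR N) by apply pos_INR. lra.
        - left; apply ac_pos; auto. }
      nra. }
    assert (0 <= q) by lra. nra. Qed.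

Lemma nb_sub r p : 0 < r -> 0 < p < 1 -> sub (negbin_pmf r p).
Proof. intros Hr Hp. split; [intros k; left; apply nb_pos; auto|].
  intros N. eapply Rle_trans; [|apply (GG_le1 r N (1 - p)); auto; lra].
  right. unfold GG. rewrite <- fsum_scal. apply fsum_ext. intros k _. rewrite nb_eq.
  unfold hh, Rpower. replace (1 - (1 - p)) with p by ring. ring. Qed.

Theorem nb_part r s p : 0 < r -> 0 < s -> 0 < p < 1 ->
  (wd_le (negbin_pmf r p) (negbin_pmf s p) <-> r <= s).
Proof. intros Hr Hs Hp. split.
  - intros H. destruct (Rle_or_lt r s) as [|Hlt]; auto. exfalso.
    assert (E : negbin_pmf r p = conv (negbin_pmf (r - s) p) (negbin_pmf s p)).
    { apply functional_extensionality. intros k. rewrite <- nb_conv. f_equal; ring. }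
    rewrite E in H. revert H. apply wd_strict.
    + apply nb_sub; lra.
    + apply nb_sub; lra.
    + intros; apply nb_pos; lra.
    + apply nb_pos; lra.
    + rewrite <- E. apply sub_lim, nb_sub; lra.
  - intros H. destruct H as [Hlt|<-]; [|apply wd_refl].
    assert (E : negbin_pmf s p = conv (negbin_pmf (s - r) p) (negbin_pmf r p)).
    { apply functional_extensionality. intros k. rewrite <- nb_conv. f_equal; ring. }
    rewrite E. apply wd_conv; apply nb_sub; lra. Qed.

Theorem mainTheorem10 :
  (forall lam mu : R, 0 < lam -> 0 < mu ->
     (wd_le (poisson_pmf lam) (poisson_pmf mu) <-> lam <= mu)) /\
  (forall (m n : nat) (p : R), 0 < p < 1 ->
     (wd_le (binom_pmf m p) (binom_pmf n p) <-> (m <= n)%nat)) /\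
  (forall r s p : R, 0 < r -> 0 < s -> 0 < p < 1 ->
     (wd_le (negbin_pmf r p) (negbin_pmf s p) <-> r <= s)).
Proof. split; [|split].
  - apply pois_part.
  - intros; apply binom_part; auto.
  - apply nb_part. Qed.
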